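(* (a) For $n\ge1$, the degree of $P_n$ is at most $n$. (b) For every $n$, $n!\,P_n(y)$ has integer coefficients.
   Context: Define polynomials $P_n(y)$ by $P_0(y)=y-1$ and, for $n\ge1$, $P_n=nP_{n-1}-P'_{n-1}+\frac{1}{n}\sum_{k=1}^{n-1}k\{(k-1)P_{k-1}-P_k-P'_{k-1}\}P_{n-k-1}$ (primes denote derivatives in $y$). Equivalently, $1+\sum_{n\ge1}P_{n-1}(y)x^{-n}$ is the unique solution $V$, in the ring of formal series $\sum_{n\ge0}q_n(y)x^{-n}$ with $\deg q_n\le n$, of $V=1+\frac{y}{x}-\frac{1}{x}V-V_x-\frac{1}{x}V_y+\frac{1}{x}\log V$, where $V_x,V_y$ are termwise formal derivatives and $\log$ is the formal logarithmic series. *)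

(* Defs.v *)
From mathcomp Require Import all_boot all_order all_algebra.
Set Implicit Arguments. Unset Strict Implicit. Unset Printing Implicit Defensive.
Import Order.TTheory GRing.Theory Num.Theory.
Local Open Scope ring_scope.

(* Given s = [:: P_0; ...; P_(n-1)], compute P_n by the recursion
   P_n = n P_{n-1} - P'_{n-1}
         + (1/n) sum_{k=1}^{n-1} k ((k-1) P_{k-1} - P_k - P'_{k-1}) P_{n-k-1}. *)
Definition Pnext (n : nat) (s : seq {poly rat}) : {poly rat} :=
  let P := fun k => nth 0 s k in
  n%:R *: P n.-1 - (P n.-1)^`()
  + (n%:R)^-1 *: \sum_(1 <= k < n)
        k%:R *: (((k.-1)%:R *: P k.-1 - P k - (P k.-1)^`()) * P (n - k).-1).

Fixpoint Pseq (n : nat) : seq {poly rat} :=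
  match n with
  | 0 => [:: 'X - 1]
  | m.+1 => rcons (Pseq m) (Pnext m.+1 (Pseq m))
  end.

Definition Ppoly (n : nat) : {poly rat} := nth 0 (Pseq n) n.

(* Main.v *)
Require Import Defs.
From mathcomp Require Import all_boot all_order all_algebra.
From mathcomp Require Import zify ring lra.
Import Order.TTheory GRing.Theory Num.Theory.
Local Open Scope ring_scope.

Lemma Pseq_size n : size (Pseq n) = n.+1.
Proof. by elim: n => //= n IH; rewrite size_rcons IH. Qed.

Lemma nth_Pseq n k : (k <= n)%N -> nth 0 (Pseq n) k = Ppoly k.
Proof.
elim: n => [|n IH]; first by rewrite leqn0 => /eqP ->.
rewrite leq_eqVlt => /orP [/eqP -> //|hk].
by rewrite /= nth_rcons Pseq_size hk IH.
Qed.

Lemma PpolyS n : Ppoly n.+1 = Pnext n.+1 (Pseq n).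
Proof. by rewrite /Ppoly /= nth_rcons Pseq_size ltnn eqxx. Qed.

Lemma Prec n : Ppoly n.+1 = n.+1%:R *: Ppoly n - (Ppoly n)^`()
  + (n.+1%:R)^-1 *: \sum_(1 <= k < n.+1)
        k%:R *: (((k.-1)%:R *: Ppoly k.-1 - Ppoly k - (Ppoly k.-1)^`()) * Ppoly (n.+1 - k).-1).
Proof.
rewrite PpolyS /Pnext /= nth_Pseq //; congr (_ + _ *: _).
apply: eq_big_nat => k /andP [hk1 hk2].
rewrite !nth_Pseq //; lia.
Qed.

Lemma size_deriv_le (p : {poly rat}) : (size p^`() <= size p)%N.
Proof.
have [->|nz] := eqVneq p 0; first by rewrite deriv0.
exact/ltnW/lt_size_deriv.
Qed.

Lemma size_sum_le (I : Type) (r : seq I) (P : pred I) (F : I -> {poly rat}) m :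
  (forall i, P i -> (size (F i) <= m)%N) -> (size (\sum_(i <- r | P i) F i)%R <= m)%N.
Proof.
move=> H; elim/big_rec: _ => [|i p Pi hp]; first by rewrite size_poly0.
by apply: leq_trans (size_polyD _ _) _; rewrite geq_max H.
Qed.

Lemma size_P n : (size (Ppoly n) <= (maxn n 1).+1)%N.
Proof.
elim: n {-2}n (leqnn n) => [|n IH] m hm.
  by move: hm; rewrite leqn0 => /eqP ->; rewrite /Ppoly /= size_XsubC.
move: hm; rewrite leq_eqVlt => /orP [/eqP ->|hm]; last by apply: IH.
rewrite Prec.
have B k : (k <= n)%N -> (size (Ppoly k) <= (maxn k 1).+1)%N by move=> hk; apply: IH.
apply: leq_trans (size_polyD _ _) _; rewrite geq_max; apply/andP; split.
  apply: leq_trans (size_polyD _ _) _; rewrite geq_max size_polyN; apply/andP; split.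
    by apply: leq_trans (size_scale_leq _ _) _; apply: leq_trans (B n (leqnn n)) _; lia.
  by apply: leq_trans (size_deriv_le _) _; apply: leq_trans (B n (leqnn n)) _; lia.
apply: leq_trans (size_scale_leq _ _) _.
rewrite big_nat_cond; apply: size_sum_le => k /andP [/andP [hk1 hk2] _].
apply: leq_trans (size_scale_leq _ _) _.
apply: leq_trans (size_polyMleq _ _) _.
have hA : (size ((k.-1)%:R *: Ppoly k.-1 - Ppoly k - (Ppoly k.-1)^`())%R <= k.+1)%N.
  have h1 : (size (Ppoly k.-1) <= k.+1)%N by apply: leq_trans (B _ _) _; lia.
  have h2 : (size (Ppoly k) <= k.+1)%N by apply: leq_trans (B _ _) _; lia.
  apply: leq_trans (size_polyD _ _) _; rewrite geq_max size_polyN; apply/andP; split.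
    apply: leq_trans (size_polyD _ _) _; rewrite geq_max size_polyN h2 andbT.
    exact: leq_trans (size_scale_leq _ _) h1.
  exact: leq_trans (size_deriv_le _) h1.
have hB := B (n.+1 - k).-1 ltac:(lia).
lia.
Qed.

Definition intP (p : {poly rat}) := forall i, p`_i \is a Num.int.

Lemma intP_nat (p : {poly rat}) c : intP p -> intP (c%:R *: p).
Proof. by move=> h i; rewrite scaler_nat coefMn; apply: rpredMn. Qed.

Lemma intPD p q : intP p -> intP q -> intP (p + q).
Proof. by move=> hp hq i; rewrite coefD; apply: rpredD. Qed.

Lemma intPB p q : intP p -> intP q -> intP (p - q).
Proof. by move=> hp hq i; rewrite coefB; apply: rpredB. Qed.

Lemma intP_deriv p : intP p -> intP p^`().
Proof. by move=> hp i; rewrite coef_deriv; apply: rpredMn. Qed.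

Lemma intPM p q : intP p -> intP q -> intP (p * q).
Proof.
move=> hp hq i; rewrite coefM; apply: rpred_sum => j _; exact: rpredM.
Qed.

Lemma intP_sum (I : Type) (r : seq I) (P : pred I) (F : I -> {poly rat}) :
  (forall i, P i -> intP (F i)) -> intP (\sum_(i <- r | P i) F i).
Proof.
move=> H j; rewrite coef_sum; apply: rpred_sum => i Pi; exact: H.
Qed.

Lemma fact_key m j : (j <= m)%N ->
  ((m.+1)`!%:R * j.+1%:R = (m.+1 * 'C(m, j))%:R * ((j.+1)`!%:R * (m - j)`!%:R) :> rat).
Proof.
move=> hj; rewrite factS (factS j) -(bin_fact hj) !natrM; ring.
Qed.

Lemma fact_int n : intP (n`!%:R *: Ppoly n).
Proof.
elim: n {-2}n (leqnn n) => [|n IH] m hm.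
  move: hm; rewrite leqn0 => /eqP ->; rewrite /Ppoly /= scale1r => i.
  rewrite coefB coefX coefC.
  by case: i => [|[|i]] /=; rewrite ?subr0 ?sub0r ?subrr ?rpredN ?rpred1 ?rpred0.
move: hm; rewrite leq_eqVlt => /orP [/eqP ->|hm]; last by apply: IH.
have B k : (k <= n)%N -> intP (k`!%:R *: Ppoly k) by move=> hk; apply: IH.
rewrite Prec scalerDr scalerBr.
apply: intPD; first apply: intPB.
- rewrite scalerA.
  have -> : (n.+1)`!%:R * n.+1%:R = (n.+1 * n.+1)%:R * n`!%:R :> rat.
    by rewrite factS !natrM; ring.
  by rewrite -scalerA; apply: intP_nat; apply: B.
- have -> : (n.+1)`!%:R = n.+1%:R * n`!%:R :> rat by rewrite factS natrM.
  rewrite -scalerA -derivZ.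
  by apply: intP_nat; apply: intP_deriv; apply: B.
rewrite scalerA.
have -> : (n.+1)`!%:R * n.+1%:R^-1 = n`!%:R :> rat.
  by rewrite factS natrM mulrAC mulfV ?mul1r ?pnatr_eq0.
rewrite scaler_sumr big_nat_cond; apply: intP_sum => k /andP [/andP [hk1 hk2] _].
case: k hk1 hk2 => // j _ hj.
clear m; case: n IH B hj => [|m] IH B hj; first by [].
have hjm : (j <= m)%N by [].
rewrite subSS subSn // !succnK scalerA fact_key // -scalerA.
apply: intP_nat.
rewrite -scalerA scalerAr scalerAl.
apply: intPM; last by apply: B; lia.
rewrite !scalerBr; apply: intPB; first apply: intPB.
- rewrite scalerA.
  have -> : (j.+1)`!%:R * j%:R = (j.+1 * j)%:R * j`!%:R :> rat.
    by rewrite factS !natrM; ring.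
  by rewrite -scalerA; apply: intP_nat; apply: B; lia.
- by apply: B.
- have -> : (j.+1)`!%:R = j.+1%:R * j`!%:R :> rat by rewrite factS natrM.
  rewrite -scalerA -derivZ.
  by apply: intP_nat; apply: intP_deriv; apply: B; lia.
Qed.

Theorem theorem4p5 :
  (forall n : nat, (1 <= n)%N -> (size (Ppoly n) <= n.+1)%N) /\
  (forall n : nat, forall i : nat, (n`!%:R * (Ppoly n)`_i : rat) \is a Num.int).
Proof.
split.
  move=> n hn; apply: leq_trans (size_P n) _; lia.
by move=> n i; rewrite -coefZ; apply: fact_int.
Qed.
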